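(* Let $(l_i)$ be a family of pairwise distinct labels indexed by a set containing the finite index sets $I,J$, and let $\sigma_i,\tau_j\in\mathbb{T}$. Then: (1) $\langle l_i:\sigma_i\mid i\in I\rangle\le\langle l_j:\tau_j\mid j\in J\rangle$ iff $J\subseteq I$ and $\sigma_j\le\tau_j$ for all $j\in J$; (2) $\langle l_i:\sigma_i\mid i\in I\rangle\cap\langle l_j:\tau_j\mid j\in J\rangle=\langle l_i:\sigma_i,\ l_j:\tau_j,\ l_k:\sigma_k\cap\tau_k\mid i\in I\setminus J,\ j\in J\setminus I,\ k\in I\cap J\rangle$; (3) $\langle l_i:\sigma_i\mid i\in I\rangle+\langle l_j:\tau_j\mid j\in J\rangle=\langle l_i:\sigma_i,\ l_j:\tau_j\mid i\in I\setminus J,\ j\in J\rangle$; (4) for every $\rho\in\mathbb{T}_R$ there exist finite $I$, distinct labels $l_i$ and types $\sigma_i$ with $\rho=\langle l_i:\sigma_i\mid i\in I\rangle$.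
   Context: $\mathbb{T}\ni\sigma ::= a\mid\omega\mid\sigma_1\to\sigma_2\mid\sigma_1\cap\sigma_2\mid\rho$ and record types $\mathbb{T}_R\ni\rho ::= \langle\rangle\mid\langle l:\sigma\rangle\mid\rho_1+\rho_2\mid\rho_1\cap\rho_2$ ($a$ type constants, $l$ labels). Subtyping $\le$ is the least preorder with: $\sigma\le\omega$; $\omega\le\omega\to\omega$; $\sigma\cap\tau\le\sigma$; $\sigma\cap\tau\le\tau$; $\sigma\le\tau_1,\sigma\le\tau_2\Rightarrow\sigma\le\tau_1\cap\tau_2$; $(\sigma\to\tau_1)\cap(\sigma\to\tau_2)\le\sigma\to\tau_1\cap\tau_2$; $\sigma_2\le\sigma_1,\tau_1\le\tau_2\Rightarrow\sigma_1\to\tau_1\le\sigma_2\to\tau_2$; $\langle l:\sigma\rangle\le\langle\rangle$; $\langle l:\sigma\rangle\cap\langle l:\tau\rangle\le\langle l:\sigma\cap\tau\rangle$; $\sigma\le\tau\Rightarrow\langle l:\sigma\rangle\le\langle l:\tau\rangle$; $\rho+\langle\rangle=\langle\rangle+\rho=\rho$; $(\rho_1+\rho_2)+\rho_3=\rho_1+(\rho_2+\rho_3)$; $(\rho_1\cap\rho_2)+\rho_3=(\rho_1+\rho_3)\cap(\rho_2+\rho_3)$; $\langle l:\sigma\rangle+(\langle l:\tau\rangle\cap\rho)=\langle l:\tau\rangle\cap\rho$; $\langle l:\sigma\rangle+(\langle l':\tau\rangle\cap\rho)=\langle l':\tau\rangle\cap(\langle l:\sigma\rangle+\rho)$ if $l\neq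 l'$; $\rho_1\le\rho_2\Rightarrow\rho_1+\rho\le\rho_2+\rho$; $\rho_1=\rho_2\Rightarrow\rho+\rho_1=\rho+\rho_2$. $\sigma=\tau$ means $\sigma\le\tau$ and $\tau\le\sigma$. Notation: for pairwise distinct labels, $\langle l_i:\sigma_i\mid i\in I\rangle$ stands for $\bigcap_{i\in I}\langle l_i:\sigma_i\rangle$ if $I\neq\emptyset$ and for $\langle\rangle$ if $I=\emptyset$ (intersections taken up to associativity and commutativity). *)

(* Defs.v *)
From mathcomp Require Import all_boot.
Set Implicit Arguments. Unset Strict Implicit. Unset Printing Implicit Defensive.

Definition label := nat.

(* Raw syntax: a single syntax for T and T_R (record intersection and
   ordinary intersection are the same constructor, as in the paper's grammar
   where rho1 /\ rho2 is both in T_R and in T). *)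
Inductive ty : Type :=
| TConst (a : nat)
| TOmega
| TArr (s t : ty)
| TInt (s t : ty)
| TEmpty
| TField (l : label) (s : ty)
| TPlus (r1 r2 : ty).

(* wf_ty s  <->  s in T ;  wf_rec r  <->  r in T_R *)
Inductive wf_ty : ty -> Prop :=
| WfConst a : wf_ty (TConst a)
| WfOmega : wf_ty TOmega
| WfArr s t : wf_ty s -> wf_ty t -> wf_ty (TArr s t)
| WfInt s t : wf_ty s -> wf_ty t -> wf_ty (TInt s t)
| WfRec r : wf_rec r -> wf_ty r
with wf_rec : ty -> Prop :=
| WrEmpty : wf_rec TEmpty
| WrField l s : wf_ty s -> wf_rec (TField l s)
| WrPlus r1 r2 : wf_rec r1 -> wf_rec r2 -> wf_rec (TPlus r1 r2)
| WrInt r1 r2 : wf_rec r1 -> wf_rec r2 -> wf_rec (TInt r1 r2).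

(* Subtyping: the least preorder (on T) closed under the listed rules.
   Equations  A = B  of the definition are given as two inclusions.
   Transitivity goes through elements of T only. *)
Inductive sub : ty -> ty -> Prop :=
| SRefl s : sub s s
| STrans s t u : wf_ty t -> sub s t -> sub t u -> sub s u
| SOmega s : sub s TOmega
| SOmegaArr : sub TOmega (TArr TOmega TOmega)
| SIntL s t : sub (TInt s t) s
| SIntR s t : sub (TInt s t) t
| SGlb s t1 t2 : sub s t1 -> sub s t2 -> sub s (TInt t1 t2)
| SArrDist s t1 t2 :
    sub (TInt (TArr s t1) (TArr s t2)) (TArr s (TInt t1 t2))
| SArr s1 s2 t1 t2 : sub s2 s1 -> sub t1 t2 -> sub (TArr s1 t1) (TArr s2 t2)
| SFieldEmpty l s : sub (TField l s) TEmpty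
| SFieldInt l s t : sub (TInt (TField l s) (TField l t)) (TField l (TInt s t))
| SField l s t : sub s t -> sub (TField l s) (TField l t)
| SPlusEmptyR1 r : wf_rec r -> sub (TPlus r TEmpty) r
| SPlusEmptyR2 r : wf_rec r -> sub r (TPlus r TEmpty)
| SPlusEmptyL1 r : wf_rec r -> sub (TPlus TEmpty r) r
| SPlusEmptyL2 r : wf_rec r -> sub r (TPlus TEmpty r)
| SPlusAssoc1 r1 r2 r3 : wf_rec r1 -> wf_rec r2 -> wf_rec r3 ->
    sub (TPlus (TPlus r1 r2) r3) (TPlus r1 (TPlus r2 r3))
| SPlusAssoc2 r1 r2 r3 : wf_rec r1 -> wf_rec r2 -> wf_rec r3 ->
    sub (TPlus r1 (TPlus r2 r3)) (TPlus (TPlus r1 r2) r3)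
| SPlusDist1 r1 r2 r3 : wf_rec r1 -> wf_rec r2 -> wf_rec r3 ->
    sub (TPlus (TInt r1 r2) r3) (TInt (TPlus r1 r3) (TPlus r2 r3))
| SPlusDist2 r1 r2 r3 : wf_rec r1 -> wf_rec r2 -> wf_rec r3 ->
    sub (TInt (TPlus r1 r3) (TPlus r2 r3)) (TPlus (TInt r1 r2) r3)
| SPlusSame1 l s t r : wf_ty s -> wf_ty t -> wf_rec r ->
    sub (TPlus (TField l s) (TInt (TField l t) r)) (TInt (TField l t) r)
| SPlusSame2 l s t r : wf_ty s -> wf_ty t -> wf_rec r ->
    sub (TInt (TField l t) r) (TPlus (TField l s) (TInt (TField l t) r))
| SPlusDiff1 l l' s t r : l <> l' -> wf_ty s -> wf_ty t -> wf_rec r ->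
    sub (TPlus (TField l s) (TInt (TField l' t) r))
        (TInt (TField l' t) (TPlus (TField l s) r))
| SPlusDiff2 l l' s t r : l <> l' -> wf_ty s -> wf_ty t -> wf_rec r ->
    sub (TInt (TField l' t) (TPlus (TField l s) r))
        (TPlus (TField l s) (TInt (TField l' t) r))
| SPlusMonL r1 r2 r : wf_rec r1 -> wf_rec r2 -> wf_rec r ->
    sub r1 r2 -> sub (TPlus r1 r) (TPlus r2 r)
| SPlusEqR1 r r1 r2 : wf_rec r1 -> wf_rec r2 -> wf_rec r ->
    sub r1 r2 -> sub r2 r1 -> sub (TPlus r r1) (TPlus r r2)
| SPlusEqR2 r r1 r2 : wf_rec r1 -> wf_rec r2 -> wf_rec r ->
    sub r1 r2 -> sub r2 r1 -> sub (TPlus r r2) (TPlus r r1).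

Definition tyeq (s t : ty) : Prop := sub s t /\ sub t s.

(* <l_1 : s_1, ..., l_n : s_n> as the (right-nested) intersection of the
   single fields, or <> for the empty list. *)
Fixpoint rec_of (fs : seq (label * ty)) : ty :=
  match fs with
  | [::] => TEmpty
  | [:: f] => TField f.1 f.2
  | f :: fs' => TInt (TField f.1 f.2) (rec_of fs')
  end.

(* Main.v *)
Require Import Defs.
From mathcomp Require Import all_boot.
Set Implicit Arguments. Unset Strict Implicit. Unset Printing Implicit Defensive.

Definition comb (o1 o2 : option ty) :=
  match o1, o2 with
  | Some a, Some b => Some (TInt a b)
  | Some a, None => Some a
  | None, o => o end.

Fixpoint R (m : label) (s : ty) : option ty :=
  match s with
  | TField l s => if l == m then Some s else None
  | TInt s t => comb (R m s) (R m t)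
  | TPlus r1 r2 => match R m r2 with Some b => Some b | None => R m r1 end
  | _ => None end.

Definition Rle (o1 o2 : option ty) :=
  match o2 with None => True | Some b => exists2 a, o1 = Some a & sub a b end.

Lemma Rle_refl o : Rle o o.
Proof. case: o => [a|] //=; exists a => //; exact: SRefl. Qed.

Lemma wf_inv_int s t : wf_ty (TInt s t) -> wf_ty s /\ wf_ty t.
Proof.
move=> H; inversion H; subst; first by split.
inversion H0; subst; split; by apply: WfRec.
Qed.

Lemma wf_inv_field l s : wf_ty (TField l s) -> wf_ty s.
Proof. move=> H; inversion H; subst. by inversion H0. Qed.

Lemma wf_inv_plus s t : wf_ty (TPlus s t) -> wf_ty s /\ wf_ty t.
Proof. move=> H; inversion H; subst. inversion H0; subst; split; by apply: WfRec. Qed.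

Lemma R_wf m s b : wf_ty s -> R m s = Some b -> wf_ty b.
Proof.
elim: s b => //=.
- move=> s IHs t IHt b /wf_inv_int [ws wt].
  case Es: (R m s) => [a|]; case Et: (R m t) => [c|] //= [<-].
  + apply: WfInt; [exact: IHs Es | exact: IHt Et].
  + exact: IHs Es.
  + exact: IHt Et.
- move=> l s IH b /wf_inv_field ws. by case: (l == m) => // [[<-]].
- move=> s IHs t IHt b /wf_inv_plus [ws wt].
  case Et: (R m t) => [c|].
  + move=> [<-]; exact: IHt Et.
  + exact: IHs.
Qed.

Ltac rr := first [exact: Rle_refl | done | (by eexists; [reflexivity | apply: SRefl])].

Lemma R_sub m s t : sub s t -> Rle (R m s) (R m t).
Proof.
elim=> {s t} /=.
- move=> s; rr.
- move=> s t u wt _ IH1 _ IH2.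
  case Eu: (R m u) IH2 => [c|] //= [b Eb bc].
  move: IH1; rewrite Eb /= => -[a Ea ab]. exists a => //.
  apply: (STrans (R_wf wt Eb)) ab bc.
- by move=> *.
- by move=> *.
- move=> s t; case: (R m s) => [a|]; case: (R m t) => [b|] => //=; eexists; eauto using SIntL, SRefl.
- move=> s t; case: (R m s) => [a|]; case: (R m t) => [b|] => //=; eexists; eauto using SIntR, SRefl.
- move=> s t1 t2 _ IH1 _ IH2.
  move: IH1 IH2; destruct (R m t1) as [b1|]; destruct (R m t2) as [b2|] => //=.
  + move=> [a Ea H2] [a' Ea' H1]; rewrite Ea in Ea'; case: Ea' => <- in H1.
    exists a => //; exact: SGlb.
- by move=> *.
- by move=> *.
- by move=> *.
- move=> l s t; case: eqP => _ /=; [rr| done].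
- move=> l s t H _; case: eqP => _ //=; by exists s.
- move=> r _; case: (R m r) => /= *; rr.
- move=> r _; case: (R m r) => /= *; rr.
- move=> r _; case: (R m r) => /= *; rr.
- move=> r _; case: (R m r) => /= *; rr.
- move=> r1 r2 r3 _ _ _; case: (R m r3) => [?|]; case: (R m r2) => [?|] /=; rr.
- move=> r1 r2 r3 _ _ _; case: (R m r3) => [?|]; case: (R m r2) => [?|] /=; rr.
- move=> r1 r2 r3 _ _ _; case: (R m r3) => [c|]; case: (R m r1) => [?|]; case: (R m r2) => [?|] /=;
    try rr; eexists; eauto; apply: SGlb; exact: SRefl.
- move=> r1 r2 r3 _ _ _; case: (R m r3) => [c|]; case: (R m r1) => [?|]; case: (R m r2) => [?|] /=;
    try rr; eexists; eauto; exact: SIntL.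
- move=> l s t r _ _ _; case: eqP => _; case: (R m r) => [?|] /=; rr.
- move=> l s t r _ _ _; case: eqP => _; case: (R m r) => [?|] /=; rr.
- move=> l l' s t r ne _ _ _; case: (R m r) => [?|]; case: eqP => [e1|n1]; case: eqP => [e2|n2] /=;
  try rr; exfalso; apply: ne; congruence.
- move=> l l' s t r ne _ _ _; case: (R m r) => [?|]; case: eqP => [e1|n1]; case: eqP => [e2|n2] /=;
  try rr; exfalso; apply: ne; congruence.
- move=> r1 r2 r _ _ _ _ IH; case: (R m r) => [?|] /=; [rr | exact: IH].
all: move=> r r1 r2 _ _ _ _ IH1 _ IH2.
all: move: IH1 IH2; case: (R m r1) => [a|]; case: (R m r2) => [b|] => /= H1 H2; try rr;
  try (by case: H1); try (by case: H2).
Qed.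

Fixpoint In' (x : label * ty) (s : seq (label * ty)) : Prop :=
  match s with [::] => False | y :: s => y = x \/ In' x s end.
Definition wfl fs := forall x, In' x fs -> wf_ty x.2.
Definition labs (fs : seq (label * ty)) := [seq f.1 | f <- fs].

Lemma In_cat x a b : In' x (a ++ b) <-> In' x a \/ In' x b.
Proof. elim: a => [|y a IH] /=; first by intuition. move: IH; tauto. Qed.

Lemma In_filter x p s : In' x (filter p s) <-> In' x s /\ p x.
Proof.
elim: s => [|y s IH] /=; first by intuition.
case Hy: (p y) => /=; move: IH.
- split; first (case=> [<-|]; by intuition).
  by case=> [[<-|]]; intuition.
- split; first by intuition.
  by case=> [[<-|]]; [rewrite Hy|]; intuition.
Qed.

Lemma In_labs x s : In' x s -> x.1 \in labs s.
Proof. elim: s => //= y s IH [<-|/IH H]; by rewrite inE ?eqxx //= H orbT. Qed.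

Lemma In_map (K : eqType) (g : K -> label * ty) x s : x \in s -> In' (g x) (map g s).
Proof. elim: s => //= y s IH; rewrite inE => /orP [/eqP ->|/IH]; auto. Qed.

Lemma In_mapP (K : eqType) (g : K -> label * ty) y s :
  In' y (map g s) -> exists2 x, x \in s & y = g x.
Proof.
elim: s => //= z s IH [<-|/IH [x xs ->]].
- by exists z; rewrite ?inE ?eqxx.
- by exists x; rewrite // inE xs orbT.
Qed.

Lemma wfl_cons f fs : wfl (f :: fs) -> wf_ty f.2 /\ wfl fs.
Proof. move=> H; split; [apply: H; by left | move=> x Hx; apply: H; by right]. Qed.

Lemma wf_rec_of fs : wfl fs -> wf_rec (rec_of fs).
Proof.
elim: fs => [|f fs IH] /=; first by constructor.
move/wfl_cons=> [wf /IH wr]; case: fs IH wr => [|g fs] _ wr; constructor => //.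
by constructor.
Qed.

Lemma wf_of fs : wfl fs -> wf_ty (rec_of fs).
Proof. move=> H; apply: WfRec; exact: wf_rec_of. Qed.

Lemma wfF l s : wf_ty s -> wf_ty (TField l s).
Proof. by move=> H; do 2 constructor. Qed.

Lemma rec_proj fs x : wfl fs -> In' x fs -> sub (rec_of fs) (TField x.1 x.2).
Proof.
elim: fs => [|f fs IH] //= /[dup] W /wfl_cons [wf wr].
case: fs IH wr W => [|g fs] IH wr W.
- by case=> [<-|[]]; exact: SRefl.
- case=> [<-|H]; first exact: SIntL.
  apply: (STrans (wf_of wr)); [exact: SIntR | exact: IH].
Qed.

Lemma rec_empty fs : wfl fs -> sub (rec_of fs) TEmpty.
Proof.
case: fs => [|f fs] W; first exact: SRefl.
apply: (STrans (t := TField f.1 f.2)); first by apply: wfF; apply: W; left.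
- by apply: rec_proj => //; left.
- exact: SFieldEmpty.
Qed.

Lemma rec_glb s fs : sub s TEmpty -> (forall x, In' x fs -> sub s (TField x.1 x.2)) ->
  sub s (rec_of fs).
Proof.
elim: fs => [|f fs IH] //= H0 H.
case: fs IH H => [|g fs] IH H; first by apply: H; left.
apply: SGlb; first by apply: H; left.
apply: IH => // x Hx; apply: H; by right.
Qed.

Lemma rec_set a b : wfl a -> (forall x, In' x b -> In' x a) -> sub (rec_of a) (rec_of b).
Proof.
move=> W H; apply: rec_glb; first exact: rec_empty.
move=> x /H; exact: rec_proj.
Qed.

Lemma int_set a b c : wfl a -> wfl b -> (forall x, In' x c -> In' x a \/ In' x b) ->
  sub (TInt (rec_of a) (rec_of b)) (rec_of c).
Proof.
move=> Wa Wb H; apply: rec_glb.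
- apply: (STrans (wf_of Wa)); [exact: SIntL | exact: rec_empty].
- move=> x /H [Hx|Hx].
  + apply: (STrans (wf_of Wa)); [exact: SIntL | exact: rec_proj].
  + apply: (STrans (wf_of Wb)); [exact: SIntR | exact: rec_proj].
Qed.

Lemma set_int a b c : wfl c -> (forall x, In' x a -> In' x c) -> (forall x, In' x b -> In' x c) ->
  sub (rec_of c) (TInt (rec_of a) (rec_of b)).
Proof. move=> W Ha Hb; apply: SGlb; exact: rec_set. Qed.

Lemma teq_sym s t : tyeq s t -> tyeq t s.
Proof. by case. Qed.

Lemma teq_trans s t u : wf_ty t -> tyeq s t -> tyeq t u -> tyeq s u.
Proof. move=> W [H1 H2] [H3 H4]; split; exact: STrans W _ _. Qed.

Lemma teq_refl s : tyeq s s.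
Proof. split; exact: SRefl. Qed.

Lemma sub_int a b a' b' : wf_ty a -> wf_ty b -> sub a a' -> sub b b' -> sub (TInt a b) (TInt a' b').
Proof.
move=> Wa Wb H1 H2; apply: SGlb.
- apply: (STrans Wa); [exact: SIntL | exact: H1].
- apply: (STrans Wb); [exact: SIntR | exact: H2].
Qed.

Lemma teq_int a b a' b' : wf_ty a -> wf_ty b -> wf_ty a' -> wf_ty b' ->
  tyeq a a' -> tyeq b b' -> tyeq (TInt a b) (TInt a' b').
Proof. move=> Wa Wb Wa' Wb' [H1 H2] [H3 H4]; split; exact: sub_int. Qed.

Lemma teq_plusL r1 r2 r : wf_rec r1 -> wf_rec r2 -> wf_rec r -> tyeq r1 r2 ->
  tyeq (TPlus r1 r) (TPlus r2 r).
Proof. move=> W1 W2 W [H1 H2]; split; exact: SPlusMonL. Qed.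

Lemma teq_plusR r r1 r2 : wf_rec r1 -> wf_rec r2 -> wf_rec r -> tyeq r1 r2 ->
  tyeq (TPlus r r1) (TPlus r r2).
Proof. move=> W1 W2 W [H1 H2]; split; [exact: SPlusEqR1 | exact: SPlusEqR2]. Qed.

Lemma rec_cons f fs : wfl (f :: fs) -> tyeq (rec_of (f :: fs)) (TInt (TField f.1 f.2) (rec_of fs)).
Proof.
move=> W; have [wf wr] := wfl_cons W.
have Wf : wfl [:: f] by move=> x [<-|[]].
split.
- apply: (set_int (a := [:: f])) => // x; [case=> [<-|[]]; by left | by right].
- apply: (int_set (a := [:: f])) => // x; case; [move=> <-; left; by left| by right].
Qed.

Lemma wfl_cat a b : wfl a -> wfl b -> wfl (a ++ b).
Proof. by move=> Wa Wb x /In_cat [/Wa|/Wb]. Qed.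

Lemma wfl_filter p a : wfl a -> wfl (filter p a).
Proof. by move=> Wa x /In_filter [/Wa]. Qed.

Lemma wfl1 l s : wf_ty s -> wfl [:: (l, s)].
Proof. by move=> W x [<-|[]]. Qed.

Ltac wfr := repeat (first [ assumption
  | apply: wfl_cat | apply: wfl_filter | apply: wfl1
  | match goal with
    | |- wf_ty (TConst _) => apply: WfConst
    | |- wf_ty (TArr _ _) => apply: WfArr
    | |- wf_ty (TInt _ _) => apply: WfInt
    | |- wf_ty _ => apply: WfRec
    | |- wf_rec (TInt _ _) => apply: WrInt
    | |- wf_rec (TPlus _ _) => apply: WrPlus
    | |- wf_rec (TField _ _) => apply: WrField
    | |- wf_rec (rec_of _) => apply: wf_rec_of
    | |- wf_rec TEmpty => apply: WrEmpty
    end]).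

Lemma plus1 l s fs : wf_ty s -> wfl fs ->
  tyeq (TPlus (TField l s) (rec_of fs))
       (rec_of ([seq y <- [:: (l, s)] | y.1 \notin labs fs] ++ fs)).
Proof.
move=> Ws; elim: fs => [|[m t] fs IH] W.
- split; [apply: SPlusEmptyR1 | apply: SPlusEmptyR2]; wfr.
- have [Wt Wfs] := wfl_cons W.
  apply: (teq_trans (t := TPlus (TField l s) (TInt (TField m t) (rec_of fs)))); first by wfr.
    apply: teq_plusR; try wfr. exact: rec_cons.
  case: (eqVneq m l) => [<-|ne].
  + have -> : [seq y <- [:: (m, s)] | y.1 \notin labs ((m, t) :: fs)] = [::]
      by rewrite /= inE eqxx.
    apply: (teq_trans (t := TInt (TField m t) (rec_of fs))); first by wfr.
      split; [apply: SPlusSame1 | apply: SPlusSame2]; wfr.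
    apply: teq_sym; exact: rec_cons.
  + have Hne : l <> m by move=> E; rewrite E eqxx in ne.
    apply: (teq_trans (t := TInt (TField m t) (TPlus (TField l s) (rec_of fs)))); first by wfr.
      split; [apply: SPlusDiff1 | apply: SPlusDiff2]; wfr.
    have Wc : wfl ([seq y <- [:: (l, s)] | y.1 \notin labs fs] ++ fs) by wfr.
    apply: (teq_trans (t := TInt (TField m t) (rec_of ([seq y <- [:: (l, s)] | y.1 \notin labs fs] ++ fs)))); first by wfr.
      apply: teq_int; try wfr; [exact: teq_refl | exact: IH].
    have E : [seq y <- [:: (l, s)] | y.1 \notin labs ((m, t) :: fs)] =
             [seq y <- [:: (l, s)] | y.1 \notin labs fs].
      by rewrite /= inE eq_sym (negbTE ne).
    rewrite E; split.
    * apply: (int_set (a := [:: (m, t)])); try wfr.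
      move=> x /In_cat [H|[H|H]]; [right; apply/In_cat; by left | left; by left | right; apply/In_cat; by right].
    * apply: (set_int (a := [:: (m, t)])); try wfr.
      - move=> x [<-|[]]; apply/In_cat; right; by left.
      - move=> x /In_cat [H|H]; apply/In_cat; [by left | right; by right].
Qed.

Lemma plusL a b : wfl a -> wfl b ->
  tyeq (TPlus (rec_of a) (rec_of b)) (rec_of ([seq y <- a | y.1 \notin labs b] ++ b)).
Proof.
move=> + Wb; elim: a => [|[m t] a IH] Wa.
- split; [apply: SPlusEmptyL1 | apply: SPlusEmptyL2]; wfr.
- have [Wt Wa'] := wfl_cons Wa.
  apply: (teq_trans (t := TPlus (TInt (TField m t) (rec_of a)) (rec_of b))); first by wfr.
    apply: teq_plusL; try wfr. exact: rec_cons.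
  apply: (teq_trans (t := TInt (TPlus (TField m t) (rec_of b)) (TPlus (rec_of a) (rec_of b)))); first by wfr.
    split; [apply: SPlusDist1 | apply: SPlusDist2]; wfr.
  have W1 : wfl ([seq y <- [:: (m, t)] | y.1 \notin labs b] ++ b) by wfr.
  have W2 : wfl ([seq y <- a | y.1 \notin labs b] ++ b) by wfr.
  apply: (teq_trans (t := TInt (rec_of ([seq y <- [:: (m, t)] | y.1 \notin labs b] ++ b))
                               (rec_of ([seq y <- a | y.1 \notin labs b] ++ b)))); first by wfr.
    apply: teq_int; try wfr; [exact: plus1 | exact: (IH Wa')].
  have Wc : wfl ([seq y <- (m, t) :: a | y.1 \notin labs b] ++ b) by wfr.
  split.
  + apply: int_set => // x /In_cat [/In_filter [[<-|H] P]|H].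
    * left; apply/In_cat; left; apply/In_filter; split => //; by left.
    * right; apply/In_cat; left; apply/In_filter; split => //.
    * left; apply/In_cat; by right.
  + apply: set_int => // x /In_cat [/In_filter [H P]|H]; apply/In_cat; try (by right).
    * left; apply/In_filter; split => //; case: H => [<-|[]]; by left.
    * left; apply/In_filter; split => //; by right.
Qed.

Lemma R_cons m f fs : R m (rec_of (f :: fs)) = comb (R m (TField f.1 f.2)) (R m (rec_of fs)).
Proof. case: fs => [|g fs] //=; by case: (f.1 == m). Qed.

Lemma R_rec_none m fs : m \notin labs fs -> R m (rec_of fs) = None.
Proof.
elim: fs => [|f fs IH] //; rewrite R_cons /= inE negb_or => /andP [ne /IH ->].
by rewrite eq_sym (negbTE ne).
Qed.

Lemma R_rec_some m s fs : uniq (labs fs) -> In' (m, s) fs -> R m (rec_of fs) = Some s.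
Proof.
elim: fs => [|[m' s'] fs IH]; first by move=> _ [].
rewrite R_cons /= => /andP [nf u] [E|H].
- by case: E nf => -> -> nf; rewrite eqxx R_rec_none.
- rewrite (IH u H); case: eqP => // E.
  by move: nf; rewrite E (In_labs H).
Qed.

Lemma labs_map (K : eqType) (l : K -> label) (g : K -> ty) I :
  labs [seq (l i, g i) | i <- I] = map l I.
Proof. by rewrite /labs -map_comp. Qed.

Lemma wfl_map (K : eqType) (l : K -> label) (g : K -> ty) I :
  {in I, forall i, wf_ty (g i)} -> wfl [seq (l i, g i) | i <- I].
Proof. by move=> H x /In_mapP [i iI ->]; apply: H. Qed.

Lemma In_map2 (K : eqType) (l : K -> label) (g : K -> ty) i s :
  i \in s -> In' (l i, g i) [seq (l j, g j) | j <- s].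
Proof. exact: (In_map (fun j => (l j, g j))). Qed.

Section Idx.
Variables (K : eqType) (l : K -> label) (sigma tau : K -> ty) (I J : seq K).
Hypotheses (linj : injective l) (uI : uniq I) (uJ : uniq J)
  (wI : {in I, forall i, wf_ty (sigma i)}) (wJ : {in J, forall j, wf_ty (tau j)}).

Let IL := [seq (l i, sigma i) | i <- I].
Let JL := [seq (l j, tau j) | j <- J].

Lemma WIL : wfl IL. Proof. exact: wfl_map. Qed.
Lemma WJL : wfl JL. Proof. exact: wfl_map. Qed.

Lemma part1 : sub (rec_of IL) (rec_of JL) <->
   ({subset J <= I} /\ {in J, forall j, sub (sigma j) (tau j)}).
Proof.
split.
- move=> H.
  have key : forall j, j \in J -> j \in I /\ sub (sigma j) (tau j).
    move=> j jJ.
    have := R_sub (l j) H.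
    rewrite (@R_rec_some (l j) (tau j) JL); last first.
      - exact: In_map (fun j => (l j, tau j)) _ _ jJ.
      - by rewrite labs_map map_inj_uniq.
    move=> /= [a Ea Hab].
    case jI: (j \in I); last first.
      by rewrite R_rec_none // labs_map mem_map // jI in Ea.
    rewrite (@R_rec_some (l j) (sigma j) IL) in Ea; last first.
      - exact: In_map (fun j => (l j, sigma j)) _ _ jI.
      - by rewrite labs_map map_inj_uniq.
    by case: Ea => ->.
  split; [move=> j /key [] // | move=> j /key []//].
- move=> [sJI Hs]; apply: rec_glb; first exact: (rec_empty WIL).
  move=> x /In_mapP [j jJ ->] /=.
  apply: (STrans (t := TField (l j) (sigma j))).
  + apply: wfF; apply: wI; exact: sJI.
  + apply: (rec_proj WIL (x := (l j, sigma j))). apply: In_map (fun j => (l j, sigma j)) _ _ (sJI _ jJ).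
  + apply: SField; exact: Hs.
Qed.

Let CL := [seq (l i, sigma i) | i <- I & i \notin J]
                   ++ [seq (l j, tau j) | j <- J & j \notin I]
                   ++ [seq (l k, TInt (sigma k) (tau k)) | k <- I & k \in J].

Lemma WCL : wfl CL.
Proof.
apply: wfl_cat; [|apply: wfl_cat]; apply: wfl_map => i; rewrite mem_filter => /andP [? ?].
- exact: wI.
- exact: wJ.
- apply: WfInt; [exact: wI | exact: wJ].
Qed.

Lemma part2 : tyeq (TInt (rec_of IL) (rec_of JL)) (rec_of CL).
Proof.
have WI := WIL; have WJ := WJL; have WC := WCL.
split.
- apply: rec_glb.
    apply: (STrans (wf_of WI)); [exact: SIntL | exact: rec_empty].
  move=> x /In_cat [/In_mapP [i]|/In_cat [/In_mapP [i]|/In_mapP [i]]];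
    rewrite mem_filter => /andP [H1 H2] -> /=.
  + apply: (STrans (wf_of WI)); first exact: SIntL.
    apply: (rec_proj WI (x := (l i, sigma i))); exact: In_map2 H2.
  + apply: (STrans (wf_of WJ)); first exact: SIntR.
    apply: (rec_proj WJ (x := (l i, tau i))); exact: In_map2 H2.
  + apply: (STrans (t := TInt (TField (l i) (sigma i)) (TField (l i) (tau i)))).
      apply: WfInt; apply: wfF; [exact: wI | exact: wJ].
    * apply: sub_int; try exact: wf_of.
      - apply: (rec_proj WI (x := (l i, sigma i))); exact: In_map2 H2.
      - apply: (rec_proj WJ (x := (l i, tau i))); exact: In_map2 H1.
    * exact: SFieldInt.
- apply: SGlb; apply: rec_glb; try exact: rec_empty.
  + move=> x /In_mapP [i iI ->] /=.
    case iJ: (i \in J).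
    * apply: (STrans (t := TField (l i) (TInt (sigma i) (tau i)))).
        apply: wfF; apply: WfInt; [exact: wI | exact: wJ].
      - apply: (rec_proj WC (x := (l i, TInt (sigma i) (tau i)))).
        apply/In_cat; right; apply/In_cat; right.
        apply: (In_map (fun j => (l j, TInt (sigma j) (tau j)))); by rewrite mem_filter iI iJ.
      - apply: SField; exact: SIntL.
    * apply: (rec_proj WC (x := (l i, sigma i))).
      apply/In_cat; left.
      apply: (In_map (fun j => (l j, sigma j))); by rewrite mem_filter iI iJ.
  + move=> x /In_mapP [i iJ ->] /=.
    case iI: (i \in I).
    * apply: (STrans (t := TField (l i) (TInt (sigma i) (tau i)))).
        apply: wfF; apply: WfInt; [exact: wI | exact: wJ].
      - apply: (rec_proj WC (x := (l i, TInt (sigma i) (tau i)))).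
        apply/In_cat; right; apply/In_cat; right.
        apply: (In_map (fun j => (l j, TInt (sigma j) (tau j)))); by rewrite mem_filter iI iJ.
      - apply: SField; exact: SIntR.
    * apply: (rec_proj WC (x := (l i, tau i))).
      apply/In_cat; right; apply/In_cat; left.
      apply: (In_map (fun j => (l j, tau j))); by rewrite mem_filter iI iJ.
Qed.

Lemma part3 : tyeq (TPlus (rec_of IL) (rec_of JL))
          (rec_of ([seq (l i, sigma i) | i <- I & i \notin J] ++ JL)).
Proof.
have -> : [seq (l i, sigma i) | i <- I & i \notin J] = [seq y <- IL | y.1 \notin labs JL].
  rewrite /IL filter_map; congr map; apply: eq_filter => i /=.
  by rewrite labs_map mem_map.
exact: plusL WIL WJL.
Qed.

End Idx.

Definition lk (fs : seq (label * ty)) (i : label) := (nth (0, TOmega) fs (index i (labs fs))).2.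

Lemma In_nth fs n : n < size fs -> In' (nth (0, TOmega) fs n) fs.
Proof. elim: fs n => [|f fs IH] [|n] //= H; [by left | right; exact: IH]. Qed.

Lemma lk_map fs : uniq (labs fs) -> [seq (i, lk fs i) | i <- labs fs] = fs.
Proof.
elim: fs => [|[m t] fs IH] //= /andP [nm u].
rewrite /lk /= eqxx /=; congr cons.
rewrite -[in RHS](IH u); apply/eq_in_map => i iF /=.
by rewrite /lk /=; case: eqP => // E; rewrite E iF in nm.
Qed.

Lemma lk_wf fs i : wfl fs -> i \in labs fs -> wf_ty (lk fs i).
Proof.
move=> W iF; apply: W; apply: In_nth.
by rewrite -(size_map fst) index_mem.
Qed.

Lemma labs_filter a (B : seq label) : labs [seq y <- a | y.1 \notin B] = [seq m <- labs a | m \notin B].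
Proof. elim: a => //= y a IH; case: ifP => _ //=; by rewrite IH. Qed.

Lemma part4 rho : wf_rec rho ->
  exists fs, uniq (labs fs) /\ wfl fs /\ tyeq rho (rec_of fs).
Proof.
elim => {rho}.
- exists [::]; split => //; split; [by move=> ? [] | exact: teq_refl].
- move=> l s Ws; exists [:: (l, s)]; split => //; split; [exact: wfl1 | exact: teq_refl].
- move=> r1 r2 W1 [fs1 [u1 [w1 e1]]] W2 [fs2 [u2 [w2 e2]]].
  exists ([seq y <- fs1 | y.1 \notin labs fs2] ++ fs2); split; [|split].
  + rewrite /labs map_cat -/(labs _) labs_filter cat_uniq filter_uniq // u2 andbT /=.
    apply/hasPn => m mb; by rewrite mem_filter mb.
  + wfr.
  + apply: (teq_trans (t := TPlus (rec_of fs1) r2)); first by wfr.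
      apply: teq_plusL; wfr.
    apply: (teq_trans (t := TPlus (rec_of fs1) (rec_of fs2))); first by wfr.
      apply: teq_plusR; wfr.
    exact: plusL.
- move=> r1 r2 W1 [fs1 [u1 [w1 e1]]] W2 [fs2 [u2 [w2 e2]]].
  have wI : {in labs fs1, forall i, wf_ty (lk fs1 i)} by move=> i; exact: lk_wf.
  have wJ : {in labs fs2, forall i, wf_ty (lk fs2 i)} by move=> i; exact: lk_wf.
  have H := part2 (fun i => i) wI wJ.
  have W := WCL (l := fun i => i) wI wJ.
  rewrite /= !lk_map // in H.
  eexists; split; [|split; [exact: W|]].
  + rewrite /labs !map_cat -!map_comp /= !map_id !cat_uniq !filter_uniq //=.
    rewrite andbT; apply/andP; split; apply/hasPn => x; rewrite ?mem_cat !mem_filter;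
      by case: (x \in labs fs1); case: (x \in labs fs2).
  + apply: (teq_trans (t := TInt (rec_of fs1) (rec_of fs2))); first by wfr.
      apply: teq_int; wfr.
    exact: H.
Qed.

Theorem lemma3p7 :
  (forall (K : eqType) (l : K -> label) (sigma tau : K -> ty) (I J : seq K),
     injective l -> uniq I -> uniq J ->
     {in I, forall i, wf_ty (sigma i)} -> {in J, forall j, wf_ty (tau j)} ->
     let RI := rec_of [seq (l i, sigma i) | i <- I] in
     let RJ := rec_of [seq (l j, tau j) | j <- J] in
     (* (1) *)
     (sub RI RJ <-> ({subset J <= I} /\ {in J, forall j, sub (sigma j) (tau j)}))
     (* (2) *)
     /\ tyeq (TInt RI RJ)
          (rec_of ([seq (l i, sigma i) | i <- I & i \notin J]
                   ++ [seq (l j, tau j) | j <- J & j \notin I]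
                   ++ [seq (l k, TInt (sigma k) (tau k)) | k <- I & k \in J]))
     (* (3) *)
     /\ tyeq (TPlus RI RJ)
          (rec_of ([seq (l i, sigma i) | i <- I & i \notin J]
                   ++ [seq (l j, tau j) | j <- J])))
  /\
  (* (4) *)
  (forall rho : ty, wf_rec rho ->
     exists fs : seq (label * ty),
       uniq [seq f.1 | f <- fs] /\ (forall n, n < size fs -> wf_ty (nth (0, TOmega) fs n).2)
       /\ tyeq rho (rec_of fs)).
Proof.
split.
- move=> K l sigma tau I J linj uI uJ wI wJ RI RJ; split; [|split].
  + exact: part1.
  + exact: part2.
  + exact: part3.
- move=> rho /part4 [fs [u [w e]]]; exists fs; split => //; split => //.
  move=> n nlt; apply: w; exact: In_nth.
Qed.
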